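(* Let $(\beta_n),(\gamma_n)$ be sequences of positive real numbers that are non-decreasing, satisfy $\gamma_n\ge\beta_n$ for all $n$ and $\gamma_n-\beta_n\to\infty$. Let $t=(t_n)$ be a sequence of positive real numbers with $T_{\beta\gamma(n)}:=\sum_{k\in[\beta_n,\gamma_n]}t_k\to\infty$ as $n\to\infty$ (the sum being over positive integers $k$ in $[\beta_n,\gamma_n]$). For $\theta\in(0,1]$, say that a sequence $(\hat f_k)$ of fuzzy functions $\hat f_k:[a,b]\to L(\mathbb R)$ belongs to $N^{\theta}_{\beta\gamma}(t)$ (with limit $\hat f:[a,b]\to L(\mathbb R)$) if for every $x\in[a,b]$, $$\frac{1}{T_{\beta\gamma(n)}^{\theta}}\sum_{k\in[\beta_n,\gamma_n]}t_k\,d(\hat f_k(x),\hat f(x))\to 0\quad (n\to\infty).$$ Then: (i) If $(\hat f_k)\in N^{\theta}_{\beta\gamma}(t)$ with limit $\hat f$ and $(\hat g_k)\in N^{\theta}_{\beta\gamma}(t)$ with limit $\hat g$, then $(\hat f_k+\hat g_k)\in N^{\theta}_{\beta\gamma}(t)$ (with limit $\hat f+\hat g$) and $(c\hat f_k)\in N^{\theta}_{\beta\gamma}(t)$ (with limit $c\hat f$) for every $c\in\mathbb R$. (ii) If $0<\theta\le\delta\le1$, then $N^{\theta}_{\beta\gamma}(t)\subseteq N^{\delta}_{\beta\gamma}(t)$; moreover, the inclusion is strict for some $\theta<\delta$.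
   Context: $L(\mathbb R)$ denotes the set of fuzzy real numbers: maps $\hat x:\mathbb R\to[0,1]$ that are normal, fuzzy convex, upper semicontinuous, with $\{t:\hat x(t)>0\}$ having compact closure. For $\alpha\in(0,1]$ the $\alpha$-cut is $[\hat x]_\alpha=\{t:\hat x(t)\ge\alpha\}=[(\hat x)^-_\alpha,(\hat x)^+_\alpha]$. The metric on $L(\mathbb R)$ is $d(\hat x,\hat y)=\sup_{0\le\alpha\le1}\max\{|(\hat x)^-_\alpha-(\hat y)^-_\alpha|,|(\hat x)^+_\alpha-(\hat y)^+_\alpha|\}$. Addition and real scalar multiplication of fuzzy numbers are the usual ones (via $\alpha$-cuts). A fuzzy function on $[a,b]$ is a map $[a,b]\to L(\mathbb R)$; operations on fuzzy functions are pointwise. *)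

(* Defs.v *)
From Stdlib Require Import Reals Lra ZArith.
From Coquelicot Require Import Coquelicot.
Open Scope R_scope.

(* u is a fuzzy real number (an element of L(R)): values in [0,1], normal,
   fuzzy convex, upper semicontinuous, and with {t | u t > 0} bounded
   (in R, its closure is compact iff it is bounded). *)
Definition is_fuzzy (u : R -> R) : Prop :=
  (forall t, 0 <= u t <= 1) /\
  (exists t, u t = 1) /\
  (forall s v l, 0 <= l <= 1 -> Rmin (u s) (u v) <= u (l * s + (1 - l) * v)) /\
  (forall t eps, 0 < eps -> exists del, 0 < del /\
      forall s, Rabs (s - t) < del -> u s < u t + eps) /\
  (exists M, forall t, 0 < u t -> Rabs t <= M).

(* alpha-cut: for alpha > 0, {t | u t >= alpha}; for alpha = 0 we use the
   support {t | u t > 0}, which has the same inf and sup as its closure [u]_0. *)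
Definition cut (u : R -> R) (alpha : R) (t : R) : Prop :=
  (0 < alpha /\ alpha <= u t) \/ (alpha <= 0 /\ 0 < u t).

Definition lower (u : R -> R) (alpha : R) : R := real (Glb_Rbar (cut u alpha)).
Definition upper (u : R -> R) (alpha : R) : R := real (Lub_Rbar (cut u alpha)).

Definition fdist (u v : R -> R) : R :=
  real (Lub_Rbar (fun r => exists alpha, 0 <= alpha <= 1 /\
     r = Rmax (Rabs (lower u alpha - lower v alpha))
              (Rabs (upper u alpha - upper v alpha)))).

(* addition via alpha-cuts: [u+v]_alpha = [u^-_a + v^-_a, u^+_a + v^+_a];
   the membership function is recovered as sup{alpha | t in the cut} (or 0). *)
Definition fadd (u v : R -> R) (t : R) : R :=
  real (Lub_Rbar (fun alpha => alpha = 0 \/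
     (0 < alpha <= 1 /\
      lower u alpha + lower v alpha <= t <= upper u alpha + upper v alpha))).

Definition fscal (c : R) (u : R -> R) (t : R) : R :=
  real (Lub_Rbar (fun alpha => alpha = 0 \/
     (0 < alpha <= 1 /\
      Rmin (c * lower u alpha) (c * upper u alpha) <= t /\
      t <= Rmax (c * lower u alpha) (c * upper u alpha)))).

Definition in_window (beta gamma : nat -> R) (n k : nat) : bool :=
  if Rle_dec (beta n) (INR k) then
    if Rle_dec (INR k) (gamma n) then Nat.ltb 0 k else false
  else false.

(* sum_{k positive integer in [beta n, gamma n]} g k ;
   all such k are <= Z.to_nat (up (gamma n)). *)
Definition wsum (beta gamma : nat -> R) (g : nat -> R) (n : nat) : R :=
  sum_f_R0 (fun k => if in_window beta gamma n k then g k else 0)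
           (Z.to_nat (up (gamma n))).

Definition Tbg (beta gamma t : nat -> R) (n : nat) : R := wsum beta gamma t n.

(* A fuzzy function on [a,b] is a map R -> (R -> R) whose values at points of
   [a,b] are fuzzy numbers (values outside [a,b] are irrelevant). *)
Definition InN (theta : R) (beta gamma t : nat -> R) (a b : R)
    (fs : nat -> R -> R -> R) (f : R -> R -> R) : Prop :=
  (forall k x, a <= x <= b -> is_fuzzy (fs k x)) /\
  (forall x, a <= x <= b -> is_fuzzy (f x)) /\
  (forall x, a <= x <= b ->
     is_lim_seq (fun n => / Rpower (Tbg beta gamma t n) theta *
                   wsum beta gamma (fun k => t k * fdist (fs k x) (f x)) n) 0).

(* Main.v *)
Require Import Defs.
From Stdlib Require Import Reals Lra Lia ZArith Classical.
From Coquelicot Require Import Coquelicot.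
Open Scope R_scope.

Lemma lub_props (E : R -> Prop) (x0 B : R) : E x0 -> (forall r, E r -> r <= B) ->
  (forall r, E r -> r <= real (Lub_Rbar E)) /\
  (forall M, (forall r, E r -> r <= M) -> real (Lub_Rbar E) <= M).
Proof.
  intros H0 HB. destruct (Lub_Rbar_correct E) as [Hub Hl].
  assert (HlB := Hl (Finite B) HB). assert (H0l := Hub x0 H0).
  revert Hub Hl HlB H0l. destruct (Lub_Rbar E) as [l| |]; simpl; intros Hub Hl HlB H0l;
  try contradiction. split.
  - intros r Hr. exact (Hub r Hr).
  - intros M HM. exact (Hl (Finite M) HM).
Qed.

Lemma glb_props (E : R -> Prop) (x0 B : R) : E x0 -> (forall r, E r -> B <= r) ->
  (forall r, E r -> real (Glb_Rbar E) <= r) /\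
  (forall M, (forall r, E r -> M <= r) -> M <= real (Glb_Rbar E)).
Proof.
  intros H0 HB. destruct (Glb_Rbar_correct E) as [Hub Hl].
  assert (HlB := Hl (Finite B) HB). assert (H0l := Hub x0 H0).
  revert Hub Hl HlB H0l. destruct (Glb_Rbar E) as [l| |]; simpl; intros Hub Hl HlB H0l;
  try contradiction. split.
  - intros r Hr. exact (Hub r Hr).
  - intros M HM. exact (Hl (Finite M) HM).
Qed.

Lemma lub_eq E x : (forall y, E y -> y <= x) ->
  (forall e, 0 < e -> exists y, E y /\ x - e < y) -> real (Lub_Rbar E) = x.
Proof.
  intros H1 H2. destruct (H2 1 Rlt_0_1) as [y0 [Hy0 _]].
  destruct (lub_props E y0 x Hy0 H1) as [P1 P2].
  apply Rle_antisym. apply P2; auto.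
  apply Rnot_lt_le; intro Hlt.
  destruct (H2 (x - real (Lub_Rbar E))) as [y [Hy Hy']]. lra.
  specialize (P1 y Hy). lra.
Qed.

Lemma glb_eq E x : (forall y, E y -> x <= y) ->
  (forall e, 0 < e -> exists y, E y /\ y < x + e) -> real (Glb_Rbar E) = x.
Proof.
  intros H1 H2. destruct (H2 1 Rlt_0_1) as [y0 [Hy0 _]].
  destruct (glb_props E y0 x Hy0 H1) as [P1 P2].
  apply Rle_antisym.
  apply Rnot_lt_le; intro Hlt.
  destruct (H2 (real (Glb_Rbar E) - x)) as [y [Hy Hy']]. lra.
  specialize (P1 y Hy). lra.
  apply P2; auto.
Qed.

Lemma lub_approx E x0 B : E x0 -> (forall r, E r -> r <= B) ->
  forall e, 0 < e -> exists r, E r /\ real (Lub_Rbar E) - e < r.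
Proof.
  intros H0 HB e He. destruct (lub_props E x0 B H0 HB) as [P1 P2].
  apply NNPP; intro Hn.
  assert (real (Lub_Rbar E) <= real (Lub_Rbar E) - e).
  { apply P2. intros r Hr. apply Rnot_lt_le. intro. apply Hn. exists r; auto. }
  lra.
Qed.

Lemma glb_approx E x0 B : E x0 -> (forall r, E r -> B <= r) ->
  forall e, 0 < e -> exists r, E r /\ r < real (Glb_Rbar E) + e.
Proof.
  intros H0 HB e He. destruct (glb_props E x0 B H0 HB) as [P1 P2].
  apply NNPP; intro Hn.
  assert (real (Glb_Rbar E) + e <= real (Glb_Rbar E)).
  { apply P2. intros r Hr. apply Rnot_lt_le. intro. apply Hn. exists r; auto. }
  lra.
Qed.
Definition Fset (L U : R -> R) (t : R) : R -> Prop :=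
  fun a => a = 0 \/ (0 < a <= 1 /\ L a <= t <= U a).
Definition Ffam (L U : R -> R) (t : R) : R := real (Lub_Rbar (Fset L U t)).

Definition good (L U : R -> R) : Prop :=
  (forall a b, 0 <= a -> a <= b -> b <= 1 -> L a <= L b /\ U b <= U a) /\
  L 1 <= U 1 /\
  (forall a, 0 < a <= 1 -> forall e, 0 < e ->
     exists b, 0 < b < a /\ L a - e < L b /\ U b < U a + e) /\
  (forall e, 0 < e -> exists b, 0 < b <= 1 /\ L b < L 0 + e /\ U 0 - e < U b).

Section Fam.
Variables L U : R -> R.

Lemma Fset_bnd t : forall r, Fset L U t r -> r <= 1.
Proof. intros r [H|[[_ H] _]]; lra. Qed.
Lemma Fset_0 t : Fset L U t 0.
Proof. left; auto. Qed.

Lemma F_ub t a : Fset L U t a -> a <= Ffam L U t.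
Proof. apply (proj1 (lub_props _ 0 1 (Fset_0 t) (Fset_bnd t))). Qed.
Lemma F_le t M : (forall a, Fset L U t a -> a <= M) -> Ffam L U t <= M.
Proof. apply (proj2 (lub_props _ 0 1 (Fset_0 t) (Fset_bnd t))). Qed.
Lemma F_range t : 0 <= Ffam L U t <= 1.
Proof. split. apply F_ub, Fset_0. apply F_le, Fset_bnd. Qed.

Hypothesis HG : good L U.

Lemma good_LU a : 0 <= a <= 1 -> L 0 <= L a /\ L a <= U a /\ U a <= U 0.
Proof.
  destruct HG as [Hm [H1 _]]. intros Ha.
  destruct (Hm 0 a) as [A B]; try lra. destruct (Hm a 1) as [C D]; try lra.
Qed.

Lemma F_nest t b : 0 < b <= 1 -> b < Ffam L U t -> L b <= t <= U b.
Proof.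
  intros Hb Hlt. destruct (lub_approx (Fset L U t) 0 1 (Fset_0 t) (Fset_bnd t) (Ffam L U t - b))
    as [r [Hr Hr']]. lra.
  unfold Ffam in Hlt. destruct Hr as [->|[Hr1 Hr2]]. unfold Ffam in Hr'. lra.
  destruct HG as [Hm _]. destruct (Hm b r) as [A B]; try lra. unfold Ffam in Hr'. lra.
Qed.

Lemma F_cut t a : 0 < a <= 1 -> (a <= Ffam L U t <-> L a <= t <= U a).
Proof.
  intros Ha. split.
  - intros Hle. destruct HG as [Hm [_ [Hlc _]]].
    split.
    + apply Rnot_lt_le. intro Hc. destruct (Hlc a Ha (L a - t)) as [b [Hb [Hb1 Hb2]]]; [lra|].
      assert (L b <= t) by (apply (F_nest t b); lra). lra.
    + apply Rnot_lt_le. intro Hc. destruct (Hlc a Ha (t - U a)) as [b [Hb [Hb1 Hb2]]]; [lra|].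
      assert (t <= U b) by (apply (F_nest t b); lra). lra.
  - intros H. apply F_ub. right. split; auto.
Qed.

Lemma F_pos t : 0 < Ffam L U t -> exists b, 0 < b <= 1 /\ L b <= t <= U b.
Proof.
  intros H. exists (Ffam L U t / 2). pose proof (F_range t).
  split. lra. apply F_nest; lra.
Qed.

Lemma F_pos2 t b : 0 < b <= 1 -> L b <= t <= U b -> 0 < Ffam L U t.
Proof. intros Hb Ht. assert (b <= Ffam L U t) by (apply F_ub; right; auto). lra. Qed.

Lemma F_fuzzy : is_fuzzy (Ffam L U).
Proof.
  pose proof HG as HG'. destruct HG' as [Hm [H1 [Hlc Hrc]]].
  split; [|split; [|split; [|split]]].
  - exact F_range.
  - exists (L 1). apply Rle_antisym. apply F_range. apply F_ub. right. lra.
  - intros s v l Hl. apply Rnot_lt_le. intro Hc.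
    set (w := l * s + (1 - l) * v) in *.
    pose proof (F_range w). pose proof (F_range s). pose proof (F_range v).
    set (m := Rmin (Ffam L U s) (Ffam L U v)) in *.
    assert (Hm1 : m <= Ffam L U s) by apply Rmin_l.
    assert (Hm2 : m <= Ffam L U v) by apply Rmin_r.
    set (b := (Ffam L U w + m) / 2).
    assert (Hs : L b <= s <= U b) by (apply F_nest; unfold b; lra).
    assert (Hv : L b <= v <= U b) by (apply F_nest; unfold b; lra).
    assert (Hw : L b <= w <= U b).
    { unfold w. destruct Hl. split; nra. }
    assert (Hbw : b <= Ffam L U w) by (apply F_ub; right; split; [unfold b; lra| exact Hw]).
    unfold b in Hbw. lra.
  - intros t e He. pose proof (F_range t).
    remember (Ffam L U t + e / 2) as b eqn:Hbdef.
    destruct (Rle_dec 1 b) as [Hb|Hb].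
    + exists 1. split. lra. intros s _. pose proof (F_range s). lra.
    + assert (Hn : ~ (L b <= t <= U b)).
      { intro Hc. assert (Hbt : b <= Ffam L U t) by (apply F_ub; right; split; [lra|auto]).
        lra. }
      destruct (Rlt_dec t (L b)) as [Ht|Ht].
      * exists (L b - t). split. lra. intros s Hs.
        destruct (Rle_dec (Ffam L U s) b) as [Hsb|Hsb]. lra.
        assert (L b <= s <= U b) by (apply F_nest; lra).
        apply Rabs_def2 in Hs. lra.
      * assert (Ht2 : U b < t) by lra.
        exists (t - U b). split. lra. intros s Hs.
        destruct (Rle_dec (Ffam L U s) b) as [Hsb|Hsb]. lra.
        assert (L b <= s <= U b) by (apply F_nest; lra).
        apply Rabs_def2 in Hs. lra.
  - exists (Rabs (L 0) + Rabs (U 0)). intros t Ht.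
    destruct (F_pos t Ht) as [b [Hb Htb]]. destruct (good_LU b) as [A [B C]]. lra.
    unfold Rabs. repeat destruct Rcase_abs; lra.
Qed.
End Fam.
Section Fam2.
Variables L U : R -> R.
Hypothesis HG : good L U.

Lemma F_lower a : 0 <= a <= 1 -> lower (Ffam L U) a = L a /\ upper (Ffam L U) a = U a.
Proof.
  intros Ha. pose proof HG as HG'. destruct HG' as [Hm [H1 [Hlc Hrc]]].
  unfold lower, upper. destruct (Rlt_le_dec 0 a) as [Hp|Hz].
  - assert (Hc : forall t, cut (Ffam L U) a t <-> L a <= t <= U a).
    { intro t. unfold cut. rewrite <- (F_cut L U HG t a); [|lra]. split.
      intros [[_ H]|[H _]]; [auto|lra]. intros H; left; auto. }
    destruct (good_LU L U HG a Ha) as [A [B C]].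
    split.
    + apply glb_eq. intros y Hy. apply Hc in Hy. lra.
      intros e He. exists (L a). split. apply Hc. lra. lra.
    + apply lub_eq. intros y Hy. apply Hc in Hy. lra.
      intros e He. exists (U a). split. apply Hc. lra. lra.
  - assert (a = 0) by lra. subst a.
    assert (Hc : forall t, cut (Ffam L U) 0 t <-> 0 < Ffam L U t).
    { intro t. unfold cut. split. intros [[H _]|[_ H]]; [lra|auto]. intros H; right; split; [lra|auto]. }
    split.
    + apply glb_eq. intros y Hy. apply Hc in Hy. destruct (F_pos L U HG y Hy) as [b [Hb Hyb]].
      destruct (good_LU L U HG b) as [A [B C]]; lra.
      intros e He. destruct (Hrc e He) as [b [Hb [Hb1 Hb2]]]. exists (L b). split; [|lra].
      apply Hc. apply (F_pos2 L U _ b Hb). destruct (good_LU L U HG b) as [A [B C]]; lra.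
    + apply lub_eq. intros y Hy. apply Hc in Hy. destruct (F_pos L U HG y Hy) as [b [Hb Hyb]].
      destruct (good_LU L U HG b) as [A [B C]]; lra.
      intros e He. destruct (Hrc e He) as [b [Hb [Hb1 Hb2]]]. exists (U b). split; [|lra].
      apply Hc. apply (F_pos2 L U _ b Hb). destruct (good_LU L U HG b) as [A [B C]]; lra.
Qed.
End Fam2.
Lemma abs_le t M : Rabs t <= M -> - M <= t <= M.
Proof. unfold Rabs; destruct Rcase_abs; intros; lra. Qed.

Section Fz.
Variable u : R -> R.
Hypothesis Hu : is_fuzzy u.

Lemma fz_bounds : exists M, forall a t, 0 <= a -> cut u a t -> Rabs t <= M.
Proof.
  destruct Hu as [_ [_ [_ [_ [M HM]]]]]. exists M. intros a t Ha [[H1 H2]|[H1 H2]]; apply HM; lra.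
Qed.

Lemma fz_ne a : 0 <= a <= 1 -> exists t, cut u a t.
Proof.
  destruct Hu as [_ [[t1 Ht1] _]]. intros Ha. exists t1. unfold cut.
  destruct (Rlt_le_dec 0 a). left; lra. right; lra.
Qed.

Lemma cut_props a : 0 <= a <= 1 ->
  (forall t, cut u a t -> lower u a <= t /\ t <= upper u a) /\
  (forall m, (forall t, cut u a t -> m <= t) -> m <= lower u a) /\
  (forall m, (forall t, cut u a t -> t <= m) -> upper u a <= m) /\
  (forall e, 0 < e -> exists t, cut u a t /\ t < lower u a + e) /\
  (forall e, 0 < e -> exists t, cut u a t /\ upper u a - e < t).
Proof.
  intros Ha. destruct fz_bounds as [M HM]. destruct (fz_ne a Ha) as [t0 Ht0].
  assert (Hb1 : forall r, cut u a r -> - M <= r).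
  { intros r Hr. specialize (HM a r ltac:(lra) Hr). apply abs_le in HM. lra. }
  assert (Hb2 : forall r, cut u a r -> r <= M).
  { intros r Hr. specialize (HM a r ltac:(lra) Hr). apply abs_le in HM. lra. }
  destruct (glb_props _ t0 _ Ht0 Hb1) as [G1 G2].
  destruct (lub_props _ t0 _ Ht0 Hb2) as [L1 L2].
  unfold lower, upper. split; [|split; [|split; [|split]]].
  - intros t Ht. split; auto.
  - auto.
  - auto.
  - apply (glb_approx _ t0 _ Ht0 Hb1).
  - apply (lub_approx _ t0 _ Ht0 Hb2).
Qed.

Lemma fz_usc_closed x a : 0 < a -> (forall e, 0 < e -> exists t, a <= u t /\ Rabs (t - x) < e) ->
  a <= u x.
Proof.
  destruct Hu as [_ [_ [_ [Husc _]]]]. intros Ha H. apply Rnot_lt_le. intro Hc.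
  destruct (Husc x (a - u x)) as [d [Hd Hd']]. lra.
  destruct (H d Hd) as [t [Ht1 Ht2]]. specialize (Hd' t Ht2). lra.
Qed.

Lemma lower_in a : 0 < a <= 1 -> a <= u (lower u a).
Proof.
  intros Ha. destruct (cut_props a) as [P1 [_ [_ [P4 _]]]]. lra.
  apply fz_usc_closed. lra. intros e He. destruct (P4 e He) as [t [Ht Ht']].
  exists t. destruct (P1 t Ht). destruct Ht as [[_ Ht]|[Ht _]]; [|lra].
  split; auto. rewrite Rabs_right; lra.
Qed.

Lemma upper_in a : 0 < a <= 1 -> a <= u (upper u a).
Proof.
  intros Ha. destruct (cut_props a) as [P1 [_ [_ [_ P5]]]]. lra.
  apply fz_usc_closed. lra. intros e He. destruct (P5 e He) as [t [Ht Ht']].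
  exists t. destruct (P1 t Ht). destruct Ht as [[_ Ht]|[Ht _]]; [|lra].
  split; auto. rewrite Rabs_left1; lra.
Qed.

Lemma fz_conv s w v : s <= w <= v -> Rmin (u s) (u v) <= u w.
Proof.
  destruct Hu as [_ [_ [Hc _]]]. intros Hw.
  destruct (Req_dec s v) as [E|E].
  - assert (w = s) by lra. subst. apply Rmin_l.
  - specialize (Hc s v ((v - w) / (v - s))).
    replace ((v - w) / (v - s) * s + (1 - (v - w) / (v - s)) * v) with w in Hc.
    apply Hc. split. apply Rmult_le_pos; [lra|]. left; apply Rinv_0_lt_compat; lra.
    apply (Rmult_le_reg_r (v - s)). lra. unfold Rdiv. rewrite Rmult_assoc, Rinv_l; lra.
    field. lra.
Qed.

Lemma cut_mono a b t : 0 <= a -> a <= b -> cut u b t -> cut u a t.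
Proof.
  intros Ha Hab [[H1 H2]|[H1 H2]]; unfold cut.
  destruct (Rlt_le_dec 0 a). left; lra. right; lra.
  right; lra.
Qed.

Lemma fz_good : good (lower u) (upper u).
Proof.
  split; [|split; [|split]].
  - intros a b Ha Hab Hb.
    destruct (cut_props a) as [A1 [A2 [A3 _]]]. lra.
    destruct (cut_props b) as [B1 [B2 [B3 _]]]. lra.
    split.
    + apply B2. intros t Ht. destruct (A1 t (cut_mono a b t Ha Hab Ht)); lra.
    + apply B3. intros t Ht. destruct (A1 t (cut_mono a b t Ha Hab Ht)); lra.
  - destruct (fz_ne 1) as [t Ht]. lra. destruct (cut_props 1) as [A1 _]. lra.
    destruct (A1 t Ht). lra.
  - intros a Ha e He.
    assert (E1 : exists b, 0 < b < a /\ lower u a - e < lower u b).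
    { apply NNPP. intro Hn.
      set (p := lower u a - e).
      assert (Hp : forall b, 0 < b < a -> b <= u p).
      { intros b Hb. assert (Hlb : lower u b <= p).
        { apply Rnot_lt_le. intro. apply Hn. exists b. split; auto. }
        assert (Hla : p <= lower u a) by (unfold p; lra).
        pose proof (fz_conv (lower u b) p (lower u a) (conj Hlb Hla)).
        pose proof (lower_in b ltac:(lra)). pose proof (lower_in a Ha).
        unfold Rmin in H; destruct Rle_dec; lra. }
      assert (Hpa : a <= u p).
      { apply Rnot_lt_le. intro Hc.
        set (b := (Rmax (u p) 0 + a) / 2).
        assert (Hm1 := Rmax_l (u p) 0). assert (Hm2 := Rmax_r (u p) 0).
        assert (Hm3 : Rmax (u p) 0 < a) by (apply Rmax_lub_lt; lra).
        specialize (Hp b ltac:(unfold b; lra)). unfold b in Hp. lra. }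
      destruct (cut_props a) as [A1 _]. lra.
      assert (cut u a p) by (left; lra). destruct (A1 p H). unfold p in H0. lra. }
    assert (E2 : exists b, 0 < b < a /\ upper u b < upper u a + e).
    { apply NNPP. intro Hn.
      set (p := upper u a + e).
      assert (Hp : forall b, 0 < b < a -> b <= u p).
      { intros b Hb. assert (Hlb : p <= upper u b).
        { apply Rnot_lt_le. intro. apply Hn. exists b. split; auto. }
        assert (Hla : upper u a <= p) by (unfold p; lra).
        pose proof (fz_conv (upper u a) p (upper u b) (conj Hla Hlb)).
        pose proof (upper_in b ltac:(lra)). pose proof (upper_in a Ha).
        unfold Rmin in H; destruct Rle_dec; lra. }
      assert (Hpa : a <= u p).
      { apply Rnot_lt_le. intro Hc.
        set (b := (Rmax (u p) 0 + a) / 2).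
        assert (Hm1 := Rmax_l (u p) 0). assert (Hm2 := Rmax_r (u p) 0).
        assert (Hm3 : Rmax (u p) 0 < a) by (apply Rmax_lub_lt; lra).
        specialize (Hp b ltac:(unfold b; lra)). unfold b in Hp. lra. }
      destruct (cut_props a) as [A1 _]. lra.
      assert (cut u a p) by (left; lra). destruct (A1 p H). unfold p in H1. lra. }
    destruct E1 as [b1 [Hb1 Hb1']]. destruct E2 as [b2 [Hb2 Hb2']].
    exists (Rmax b1 b2). assert (Hm1 := Rmax_l b1 b2). assert (Hm2 := Rmax_r b1 b2).
    assert (Hm3 : Rmax b1 b2 < a) by (apply Rmax_lub_lt; lra).
    destruct (cut_props b1) as [A1 [A2 [A3 _]]]. lra.
    destruct (cut_props b2) as [C1 [C2 [C3 _]]]. lra.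
    destruct (cut_props (Rmax b1 b2)) as [B1 [B2 [B3 _]]]. lra.
    split. lra. split.
    + assert (lower u b1 <= lower u (Rmax b1 b2)).
      { apply B2. intros t Ht. destruct (A1 t (cut_mono b1 (Rmax b1 b2) t ltac:(lra) Hm1 Ht)); lra. }
      lra.
    + assert (upper u (Rmax b1 b2) <= upper u b2).
      { apply B3. intros t Ht. destruct (C1 t (cut_mono b2 (Rmax b1 b2) t ltac:(lra) Hm2 Ht)); lra. }
      lra.
  - intros e He. destruct (cut_props 0) as [Z1 [Z2 [Z3 [Z4 Z5]]]]. lra.
    destruct (Z4 e He) as [t [Ht Ht']]. destruct (Z5 e He) as [t' [Ht2 Ht2']].
    destruct Ht as [[? _]|[_ Ht]]; [lra|]. destruct Ht2 as [[? _]|[_ Ht2]]; [lra|].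
    destruct Hu as [Hr _].
    assert (Hbm1 := Rmin_l (u t) (u t')). assert (Hbm2 := Rmin_r (u t) (u t')).
    assert (Hbp : 0 < Rmin (u t) (u t')) by (apply Rmin_glb_lt; lra).
    remember (Rmin (u t) (u t')) as b eqn:Hb.
    pose proof (Hr t). pose proof (Hr t').
    exists b. split. split. lra. lra.
    destruct (cut_props b) as [B1 _]. lra.
    assert (Hc1 : cut u b t) by (left; lra). assert (Hc2 : cut u b t') by (left; lra).
    destruct (B1 t Hc1). destruct (B1 t' Hc2). lra.
Qed.
End Fz.
Lemma good_add L1 U1 L2 U2 : good L1 U1 -> good L2 U2 ->
  good (fun a => L1 a + L2 a) (fun a => U1 a + U2 a).
Proof.
  intros [M1 [O1 [C1 R1]]] [M2 [O2 [C2 R2]]]. split; [|split; [|split]].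
  - intros a b Ha Hab Hb. destruct (M1 a b Ha Hab Hb). destruct (M2 a b Ha Hab Hb). lra.
  - lra.
  - intros a Ha e He. destruct (C1 a Ha (e/2)) as [b1 [Hb1 [P1 Q1]]]. lra.
    destruct (C2 a Ha (e/2)) as [b2 [Hb2 [P2 Q2]]]. lra.
    exists (Rmax b1 b2). assert (Hm1 := Rmax_l b1 b2). assert (Hm2 := Rmax_r b1 b2).
    assert (Hm3 : Rmax b1 b2 < a) by (apply Rmax_lub_lt; lra).
    destruct (M1 b1 (Rmax b1 b2)); try lra. destruct (M2 b2 (Rmax b1 b2)); try lra.
  - intros e He. destruct (R1 (e/2)) as [b1 [Hb1 [P1 Q1]]]. lra.
    destruct (R2 (e/2)) as [b2 [Hb2 [P2 Q2]]]. lra.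
    exists (Rmin b1 b2). assert (Hm1 := Rmin_l b1 b2). assert (Hm2 := Rmin_r b1 b2).
    assert (Hm3 : 0 < Rmin b1 b2) by (apply Rmin_glb_lt; lra).
    destruct (M1 (Rmin b1 b2) b1); try lra. destruct (M2 (Rmin b1 b2) b2); try lra.
Qed.

Lemma good_scal_pos c L U : 0 < c -> good L U -> good (fun a => c * L a) (fun a => c * U a).
Proof.
  intros Hc [M1 [O1 [C1 R1]]]. split; [|split; [|split]].
  - intros a b Ha Hab Hb. destruct (M1 a b Ha Hab Hb). split; apply Rmult_le_compat_l; lra.
  - apply Rmult_le_compat_l; lra.
  - intros a Ha e He. destruct (C1 a Ha (e/c)) as [b1 [Hb1 [P1 Q1]]].
    apply Rdiv_lt_0_compat; lra.
    exists b1. split. auto. split.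
    + assert (c * (L a - e / c) < c * L b1) by (apply Rmult_lt_compat_l; lra).
      replace (c * (L a - e / c)) with (c * L a - e) in H by (field; lra). lra.
    + assert (c * U b1 < c * (U a + e / c)) by (apply Rmult_lt_compat_l; lra).
      replace (c * (U a + e / c)) with (c * U a + e) in H by (field; lra). lra.
  - intros e He. destruct (R1 (e/c)) as [b1 [Hb1 [P1 Q1]]].
    apply Rdiv_lt_0_compat; lra.
    exists b1. split. auto. split.
    + assert (c * L b1 < c * (L 0 + e / c)) by (apply Rmult_lt_compat_l; lra).
      replace (c * (L 0 + e / c)) with (c * L 0 + e) in H by (field; lra). lra.
    + assert (c * (U 0 - e / c) < c * U b1) by (apply Rmult_lt_compat_l; lra).
      replace (c * (U 0 - e / c)) with (c * U 0 - e) in H by (field; lra). lra.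
Qed.

Lemma good_zero : good (fun _ => 0) (fun _ => 0).
Proof.
  split; [|split; [|split]].
  - intros; lra.
  - lra.
  - intros a Ha e He. exists (a/2). lra.
  - intros e He. exists 1. lra.
Qed.

Lemma good_const x : good (fun _ => x) (fun _ => x).
Proof.
  split; [|split; [|split]].
  - intros; lra.
  - lra.
  - intros a Ha e He. exists (a/2). lra.
  - intros e He. exists 1. lra.
Qed.

Lemma good_neg L U : good L U -> good (fun a => - U a) (fun a => - L a).
Proof.
  intros [M1 [O1 [C1 R1]]]. split; [|split; [|split]].
  - intros a b Ha Hab Hb. destruct (M1 a b Ha Hab Hb). lra.
  - lra.
  - intros a Ha e He. destruct (C1 a Ha e) as [b1 [Hb1 [P1 Q1]]]; auto.
    exists b1. lra.
  - intros e He. destruct (R1 e) as [b1 [Hb1 [P1 Q1]]]; auto. exists b1. lra.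
Qed.

Lemma good_ext L U L' U' : good L U -> (forall a, 0 <= a <= 1 -> L' a = L a /\ U' a = U a) ->
  good L' U'.
Proof.
  intros [M1 [O1 [C1 R1]]] HE. split; [|split; [|split]].
  - intros a b Ha Hab Hb. destruct (HE a) as [E1 E2]. lra. destruct (HE b) as [E3 E4]. lra.
    rewrite E1, E2, E3, E4. auto.
  - destruct (HE 1) as [E1 E2]. lra. rewrite E1, E2; auto.
  - intros a Ha e He. destruct (C1 a Ha e) as [b1 [Hb1 [P1 Q1]]]; auto.
    exists b1. destruct (HE a) as [E1 E2]. lra. destruct (HE b1) as [E3 E4]. lra.
    rewrite E1, E2, E3, E4. auto.
  - intros e He. destruct (R1 e) as [b1 [Hb1 [P1 Q1]]]; auto. exists b1.
    destruct (HE 0) as [E1 E2]. lra. destruct (HE b1) as [E3 E4]. lra.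
    rewrite E1, E2, E3, E4. auto.
Qed.

Lemma good_scal c L U : good L U ->
  good (fun a => Rmin (c * L a) (c * U a)) (fun a => Rmax (c * L a) (c * U a)).
Proof.
  intros HG. destruct (Rlt_le_dec 0 c) as [Hc|Hc].
  - apply (good_ext _ _ _ _ (good_scal_pos c L U Hc HG)).
    intros a Ha. destruct (good_LU L U HG a Ha) as [_ [B _]].
    assert (c * L a <= c * U a) by (apply Rmult_le_compat_l; lra).
    rewrite Rmin_left, Rmax_right; auto.
  - destruct (Req_dec c 0) as [E|E].
    + subst c. apply (good_ext _ _ _ _ good_zero).
      intros a Ha. rewrite !Rmult_0_l, Rmin_left, Rmax_left; lra.
    + assert (Hc' : 0 < - c) by lra.
      pose proof (good_neg _ _ (good_scal_pos (-c) L U Hc' HG)) as HN.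
      apply (good_ext _ _ _ _ HN).
      intros a Ha. destruct (good_LU L U HG a Ha) as [_ [B _]].
      assert (c * U a <= c * L a) by (apply Rmult_le_compat_neg_l; lra).
      rewrite Rmin_right, Rmax_left; auto. split; ring.
Qed.

Lemma fadd_props u v : is_fuzzy u -> is_fuzzy v ->
  is_fuzzy (fadd u v) /\ forall a, 0 <= a <= 1 ->
    lower (fadd u v) a = lower u a + lower v a /\ upper (fadd u v) a = upper u a + upper v a.
Proof.
  intros Hu Hv. pose proof (good_add _ _ _ _ (fz_good u Hu) (fz_good v Hv)) as HG.
  change (fadd u v) with (Ffam (fun a => lower u a + lower v a) (fun a => upper u a + upper v a)).
  split. apply F_fuzzy; auto. intros a Ha. exact (F_lower _ _ HG a Ha).
Qed.

Lemma fscal_props c u : is_fuzzy u ->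
  is_fuzzy (fscal c u) /\ forall a, 0 <= a <= 1 ->
    lower (fscal c u) a = Rmin (c * lower u a) (c * upper u a) /\
    upper (fscal c u) a = Rmax (c * lower u a) (c * upper u a).
Proof.
  intros Hu. pose proof (good_scal c _ _ (fz_good u Hu)) as HG.
  change (fscal c u) with (Ffam (fun a => Rmin (c * lower u a) (c * upper u a))
                                (fun a => Rmax (c * lower u a) (c * upper u a))).
  split. apply F_fuzzy; auto. intros a Ha. exact (F_lower _ _ HG a Ha).
Qed.

Definition dset (u v : R -> R) : R -> Prop := fun r => exists alpha, 0 <= alpha <= 1 /\
     r = Rmax (Rabs (lower u alpha - lower v alpha)) (Rabs (upper u alpha - upper v alpha)).

Lemma fdist_le u v D : (forall a, 0 <= a <= 1 ->
   Rabs (lower u a - lower v a) <= D /\ Rabs (upper u a - upper v a) <= D) -> fdist u v <= D.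
Proof.
  intros H. unfold fdist. fold (dset u v).
  assert (HB : forall r, dset u v r -> r <= D).
  { intros r [a [Ha ->]]. destruct (H a Ha). apply Rmax_lub; auto. }
  assert (H0 : dset u v (Rmax (Rabs (lower u 0 - lower v 0)) (Rabs (upper u 0 - upper v 0)))).
  { exists 0. split; [lra|auto]. }
  apply (proj2 (lub_props _ _ _ H0 HB)). auto.
Qed.

Lemma fz_abs u a : is_fuzzy u -> 0 <= a <= 1 ->
  Rabs (lower u a) <= Rabs (lower u 0) + Rabs (upper u 0) /\
  Rabs (upper u a) <= Rabs (lower u 0) + Rabs (upper u 0).
Proof.
  intros Hu Ha. destruct (good_LU _ _ (fz_good u Hu) a Ha) as [A [B C]].
  unfold Rabs; repeat destruct Rcase_abs; lra.
Qed.

Lemma fdist_ge u v a : is_fuzzy u -> is_fuzzy v -> 0 <= a <= 1 ->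
   Rabs (lower u a - lower v a) <= fdist u v /\ Rabs (upper u a - upper v a) <= fdist u v.
Proof.
  intros Hu Hv Ha. unfold fdist. fold (dset u v).
  set (B := (Rabs (lower u 0) + Rabs (upper u 0)) + (Rabs (lower v 0) + Rabs (upper v 0))).
  assert (HB : forall r, dset u v r -> r <= B).
  { intros r [b [Hb ->]]. destruct (fz_abs u b Hu Hb). destruct (fz_abs v b Hv Hb).
    apply Rmax_lub; eapply Rle_trans; try apply Rabs_triang; rewrite Rabs_Ropp; unfold B; lra. }
  assert (H0 : dset u v (Rmax (Rabs (lower u a - lower v a)) (Rabs (upper u a - upper v a)))).
  { exists a. split; [lra|auto]. }
  pose proof (proj1 (lub_props _ _ _ H0 HB) _ H0).
  split; eapply Rle_trans; [apply Rmax_l| apply H| apply Rmax_r| apply H].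
Qed.

Lemma fdist_nonneg u v : is_fuzzy u -> is_fuzzy v -> 0 <= fdist u v.
Proof.
  intros Hu Hv. destruct (fdist_ge u v 0 Hu Hv) as [A _]. lra.
  eapply Rle_trans; [apply Rabs_pos|apply A].
Qed.

Lemma fdist_add u u' v v' : is_fuzzy u -> is_fuzzy u' -> is_fuzzy v -> is_fuzzy v' ->
  fdist (fadd u u') (fadd v v') <= fdist u v + fdist u' v'.
Proof.
  intros Hu Hu' Hv Hv'. apply fdist_le. intros a Ha.
  destruct (fadd_props u u' Hu Hu') as [_ P1]. destruct (fadd_props v v' Hv Hv') as [_ P2].
  destruct (P1 a Ha) as [-> ->]. destruct (P2 a Ha) as [-> ->].
  destruct (fdist_ge u v a Hu Hv Ha). destruct (fdist_ge u' v' a Hu' Hv' Ha).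
  split.
  - replace (lower u a + lower u' a - (lower v a + lower v' a)) with
      ((lower u a - lower v a) + (lower u' a - lower v' a)) by ring.
    eapply Rle_trans; [apply Rabs_triang|lra].
  - replace (upper u a + upper u' a - (upper v a + upper v' a)) with
      ((upper u a - upper v a) + (upper u' a - upper v' a)) by ring.
    eapply Rle_trans; [apply Rabs_triang|lra].
Qed.

Lemma fdist_scal c u v : is_fuzzy u -> is_fuzzy v ->
  fdist (fscal c u) (fscal c v) <= Rabs c * fdist u v.
Proof.
  intros Hu Hv. apply fdist_le. intros a Ha.
  destruct (fscal_props c u Hu) as [_ P1]. destruct (fscal_props c v Hv) as [_ P2].
  destruct (P1 a Ha) as [-> ->]. destruct (P2 a Ha) as [-> ->].
  destruct (fdist_ge u v a Hu Hv Ha) as [D1 D2].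
  destruct (good_LU _ _ (fz_good u Hu) a Ha) as [_ [Bu _]].
  destruct (good_LU _ _ (fz_good v Hv) a Ha) as [_ [Bv _]].
  assert (Hc0 : 0 <= Rabs c) by apply Rabs_pos.
  destruct (Rle_lt_dec 0 c) as [Hc|Hc].
  - assert (c * lower u a <= c * upper u a) by (apply Rmult_le_compat_l; lra).
    assert (c * lower v a <= c * upper v a) by (apply Rmult_le_compat_l; lra).
    rewrite !Rmin_left, !Rmax_right; auto.
    rewrite <- !Rmult_minus_distr_l, !Rabs_mult. split; apply Rmult_le_compat_l; auto.
  - assert (c * upper u a <= c * lower u a) by (apply Rmult_le_compat_neg_l; lra).
    assert (c * upper v a <= c * lower v a) by (apply Rmult_le_compat_neg_l; lra).
    rewrite !Rmin_right, !Rmax_left; auto.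
    rewrite <- !Rmult_minus_distr_l, !Rabs_mult. split; apply Rmult_le_compat_l; auto.
Qed.
Lemma wsum_le beta gamma g h n : (forall k, in_window beta gamma n k = true -> g k <= h k) ->
  wsum beta gamma g n <= wsum beta gamma h n.
Proof.
  intros H. unfold wsum. apply sum_Rle. intros k _.
  destruct (in_window beta gamma n k) eqn:E. apply H; auto. lra.
Qed.

Lemma wsum_plus beta gamma g h n :
  wsum beta gamma (fun k => g k + h k) n = wsum beta gamma g n + wsum beta gamma h n.
Proof.
  unfold wsum. rewrite <- plus_sum. apply sum_eq. intros k _.
  destruct (in_window beta gamma n k); ring.
Qed.

Lemma wsum_scal beta gamma g c n :
  wsum beta gamma (fun k => g k * c) n = c * wsum beta gamma g n.
Proof.
  unfold wsum. rewrite scal_sum. apply sum_eq. intros k _.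
  destruct (in_window beta gamma n k); ring.
Qed.

Lemma wsum_nonneg beta gamma g n : (forall k, in_window beta gamma n k = true -> 0 <= g k) ->
  0 <= wsum beta gamma g n.
Proof.
  intros H. unfold wsum. apply cond_pos_sum. intros k.
  destruct (in_window beta gamma n k) eqn:E. apply H; auto. lra.
Qed.

Lemma in_window_prop beta gamma n k : in_window beta gamma n k = true ->
  beta n <= INR k <= gamma n.
Proof.
  unfold in_window. destruct Rle_dec; [|discriminate]. destruct Rle_dec; [|discriminate]. auto.
Qed.

Lemma squeeze0 (w v : nat -> R) : (forall n, 0 <= w n <= v n) -> is_lim_seq v 0 -> is_lim_seq w 0.
Proof.
  intros H Hv. apply (is_lim_seq_le_le (fun _ => 0) w v); auto. apply is_lim_seq_const.
Qed.

Lemma lim_bound c (s : nat -> R) : is_lim_seq s 0 -> eventually (fun n => c <= s n) -> c <= 0.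
Proof.
  intros Hs He. assert (H := is_lim_seq_le_loc (fun _ => c) s c 0 He (is_lim_seq_const c) Hs).
  simpl in H. auto.
Qed.

Lemma ev_gt (T : nat -> R) M : is_lim_seq T p_infty -> eventually (fun n => M < T n).
Proof. intros H. apply is_lim_seq_spec in H. apply H. Qed.

Lemma inv_rpow_pos T th : 0 < / Rpower T th.
Proof. apply Rinv_0_lt_compat. unfold Rpower. apply exp_pos. Qed.

Section Main.
Variables (beta gamma t : nat -> R).
Hypothesis ht_pos : forall k, 0 < t k.
Hypothesis hT : is_lim_seq (Tbg beta gamma t) p_infty.

Lemma part_i_add theta fs gs f g a b :
     InN theta beta gamma t a b fs f ->
     InN theta beta gamma t a b gs g ->
     InN theta beta gamma t a b (fun k x => fadd (fs k x) (gs k x))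
                                (fun x => fadd (f x) (g x)).
Proof.
  intros [F1 [F2 F3]] [G1 [G2 G3]]. split; [|split].
  - intros k x Hx. apply fadd_props; auto.
  - intros x Hx. apply fadd_props; auto.
  - intros x Hx. specialize (F3 x Hx). specialize (G3 x Hx).
    pose proof (is_lim_seq_plus' _ _ _ _ F3 G3) as H. rewrite Rplus_0_r in H.
    eapply squeeze0; [|exact H]. intros n. simpl.
    pose proof (inv_rpow_pos (Tbg beta gamma t n) theta) as Hp.
    split.
    + apply Rmult_le_pos. lra. apply wsum_nonneg. intros k _.
      apply Rmult_le_pos. left; auto. apply fdist_nonneg; apply fadd_props; auto.
    + rewrite <- Rmult_plus_distr_l. apply Rmult_le_compat_l. lra.
      rewrite <- wsum_plus. apply wsum_le. intros k _.
      rewrite <- Rmult_plus_distr_l. apply Rmult_le_compat_l. left; auto.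
      apply fdist_add; auto.
Qed.

Lemma part_i_scal theta fs f a b c :
     InN theta beta gamma t a b fs f ->
     InN theta beta gamma t a b (fun k x => fscal c (fs k x)) (fun x => fscal c (f x)).
Proof.
  intros [F1 [F2 F3]]. split; [|split].
  - intros k x Hx. apply fscal_props; auto.
  - intros x Hx. apply fscal_props; auto.
  - intros x Hx. specialize (F3 x Hx).
    pose proof (is_lim_seq_scal_l _ (Rabs c) _ F3) as H. simpl in H. rewrite Rmult_0_r in H.
    eapply squeeze0; [|exact H]. intros n. simpl.
    pose proof (inv_rpow_pos (Tbg beta gamma t n) theta) as Hp.
    assert (Hc := Rabs_pos c).
    split.
    + apply Rmult_le_pos. lra. apply wsum_nonneg. intros k _.
      apply Rmult_le_pos. left; auto. apply fdist_nonneg; apply fscal_props; auto.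
    + rewrite <- Rmult_assoc, (Rmult_comm (Rabs c)), Rmult_assoc.
      apply Rmult_le_compat_l. lra.
      rewrite <- wsum_scal. apply wsum_le. intros k _.
      specialize (ht_pos k).
      pose proof (fdist_scal c (fs k x) (f x) (F1 k x Hx) (F2 x Hx)). nra.
Qed.

Lemma part_ii theta delta fs f a b : 0 < theta -> theta <= delta -> delta <= 1 ->
  InN theta beta gamma t a b fs f -> InN delta beta gamma t a b fs f.
Proof.
  intros H1 H2 H3 [F1 [F2 F3]]. split; [|split]; auto.
  intros x Hx. specialize (F3 x Hx).
  eapply (is_lim_seq_le_le_loc (fun _ => 0)); [|apply is_lim_seq_const|exact F3]. simpl.
  destruct (ev_gt _ 1 hT) as [N HN]. exists N. intros n Hn. specialize (HN n Hn).
  set (A := wsum beta gamma (fun k => t k * fdist (fs k x) (f x)) n).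
  assert (HA : 0 <= A).
  { apply wsum_nonneg. intros k _. apply Rmult_le_pos. left; auto. apply fdist_nonneg; auto. }
  pose proof (inv_rpow_pos (Tbg beta gamma t n) delta).
  split. apply Rmult_le_pos; lra.
  apply Rmult_le_compat_r; auto. apply Rinv_le_contravar.
  unfold Rpower; apply exp_pos. apply Rle_Rpower; lra.
Qed.
End Main.
Definition phi (T : R) : R := / Rmax 1 (sqrt T).

Lemma phi_props T : 0 < phi T <= 1.
Proof.
  unfold phi. assert (H := Rmax_l 1 (sqrt T)). split.
  apply Rinv_0_lt_compat; lra.
  assert (H1 : / Rmax 1 (sqrt T) <= / 1) by (apply Rinv_le_contravar; lra).
  rewrite Rinv_1 in H1. exact H1.
Qed.

Lemma phi_mul T : 1 <= T -> phi T * T = sqrt T.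
Proof.
  intros H. unfold phi. assert (1 <= sqrt T) by (rewrite <- sqrt_1; apply sqrt_le_1_alt; lra).
  rewrite Rmax_right by lra. pose proof (sqrt_sqrt T ltac:(lra)).
  rewrite <- H1 at 2. field. lra.
Qed.

Lemma phi_small T e : 0 < e -> (2 / e) ^ 2 <= T -> phi T <= e / 2.
Proof.
  intros He HT. unfold phi.
  assert (Hs : 2 / e <= sqrt T).
  { rewrite <- (sqrt_pow2 (2 / e)). apply sqrt_le_1_alt; auto.
    left; apply Rdiv_lt_0_compat; lra. }
  assert (H2 : 0 < 2 / e) by (apply Rdiv_lt_0_compat; lra).
  assert (H3 := Rmax_r 1 (sqrt T)).
  replace (e / 2) with (/ (2 / e)) by (field; lra).
  apply Rinv_le_contravar; lra.
Qed.

Definition Eset (beta gamma T : nat -> R) (k : nat) : R -> Prop :=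
  fun r => r = 0 \/ exists n, in_window beta gamma n k = true /\ r = phi (T n).
Definition ee (beta gamma T : nat -> R) (k : nat) : R := real (Lub_Rbar (Eset beta gamma T k)).

Lemma ee_props beta gamma T k :
  (forall r, Eset beta gamma T k r -> r <= ee beta gamma T k) /\
  (forall M, (forall r, Eset beta gamma T k r -> r <= M) -> ee beta gamma T k <= M).
Proof.
  apply (lub_props _ 0 1). left; auto.
  intros r [->|[n [_ ->]]]. lra. apply phi_props.
Qed.

Lemma ee_range beta gamma T k : 0 <= ee beta gamma T k <= 1.
Proof.
  destruct (ee_props beta gamma T k) as [P1 P2]. split.
  apply P1. left; auto. apply P2. intros r [->|[n [_ ->]]]. lra. apply phi_props.
Qed.

Definition crisp (x : R) : R -> R := Ffam (fun _ => x) (fun _ => x).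

Lemma crisp_fuzzy x : is_fuzzy (crisp x).
Proof. apply F_fuzzy, good_const. Qed.

Lemma crisp_lower x a : 0 <= a <= 1 -> lower (crisp x) a = x /\ upper (crisp x) a = x.
Proof. intros Ha. exact (F_lower _ _ (good_const x) a Ha). Qed.

Lemma crisp_dist x y : fdist (crisp x) (crisp y) <= Rabs (x - y).
Proof.
  apply fdist_le. intros a Ha. destruct (crisp_lower x a Ha) as [-> ->].
  destruct (crisp_lower y a Ha) as [-> ->]. lra.
Qed.

Lemma IZR_le_toNat z : IZR z <= INR (Z.to_nat z).
Proof. rewrite INR_IZR_INZ. apply IZR_le. lia. Qed.

Lemma sum_cond_eq (t : nat -> R) K : forall N,
  sum_f_R0 (fun k => if (k <=? K)%nat then t k else 0) N = sum_f_R0 t (Nat.min N K).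
Proof.
  induction N.
  - simpl. replace (Nat.min 0 K) with 0%nat by lia. simpl. reflexivity.
  - rewrite tech5, IHN. destruct (S N <=? K)%nat eqn:E.
    + apply Nat.leb_le in E. rewrite Nat.min_l by lia. rewrite Nat.min_l by lia.
      rewrite tech5. reflexivity.
    + apply Nat.leb_gt in E. rewrite Nat.min_r by lia. rewrite Nat.min_r by lia. ring.
Qed.

Lemma psum_mono (t : nat -> R) m d : (forall k, 0 <= t k) -> sum_f_R0 t m <= sum_f_R0 t (m + d).
Proof.
  intros H. induction d. rewrite Nat.add_0_r; lra.
  rewrite Nat.add_succ_r, tech5. specialize (H (S (m + d))). lra.
Qed.

Section Strict.
Variables (beta gamma t : nat -> R).
Hypothesis ht_pos : forall k, 0 < t k.
Hypothesis hgamma_mono : forall n, gamma n <= gamma (S n).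
Hypothesis hT : is_lim_seq (Tbg beta gamma t) p_infty.

Let T := Tbg beta gamma t.
Let e := ee beta gamma T.

Lemma gamma_mono n m : (n <= m)%nat -> gamma n <= gamma m.
Proof.
  induction 1. lra. specialize (hgamma_mono m). lra.
Qed.

Lemma T_nonneg n : 0 <= T n.
Proof. apply wsum_nonneg. intros k _. left; auto. Qed.

Lemma W_lim : is_lim_seq (fun n => / Rpower (T n) 1 * wsum beta gamma (fun k => t k * e k) n) 0.
Proof.
  apply is_lim_seq_spec. intros [eps Heps]. simpl.
  destruct (ev_gt _ ((2 / eps) ^ 2 + 1) hT) as [N1 HN1].
  set (K := Z.to_nat (up (gamma N1))).
  set (C := sum_f_R0 t K).
  assert (HC : 0 <= C) by (apply cond_pos_sum; intro; left; auto).
  destruct (ev_gt _ (2 * C / eps + 1) hT) as [N2 HN2].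
  exists (Nat.max N1 N2). intros n Hn.
  assert (Hn1 := HN1 n ltac:(lia)). assert (Hn2 := HN2 n ltac:(lia)). fold T in Hn1, Hn2.
  assert (Hp2 : 0 <= (2 / eps) ^ 2) by (apply pow2_ge_0).
  assert (HT1 : 1 < T n) by lra.
  rewrite Rpower_1 by lra.
  assert (He_small : forall k, (K < k)%nat -> e k <= eps / 2).
  { intros k Hk. unfold e. apply (proj2 (ee_props _ _ _ k)).
    intros r [->|[m [Hm ->]]]. lra.
    destruct (le_lt_dec N1 m) as [Hm1|Hm1].
    - apply phi_small; auto. specialize (HN1 m Hm1). fold T in HN1. lra.
    - exfalso. apply in_window_prop in Hm. assert (gamma m <= gamma N1) by (apply gamma_mono; lia).
      assert (INR K < INR k) by (apply lt_INR; auto).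
      assert (IZR (up (gamma N1)) <= INR K) by apply IZR_le_toNat.
      destruct (archimed (gamma N1)). lra. }
  set (w := wsum beta gamma (fun k => t k * e k) n).
  assert (Hw0 : 0 <= w).
  { apply wsum_nonneg. intros k _. apply Rmult_le_pos. left; auto. apply ee_range. }
  assert (Hw : w <= eps / 2 * T n + C).
  { apply Rle_trans with (wsum beta gamma (fun k => t k * (eps / 2) +
        (if (k <=? K)%nat then t k else 0)) n).
    - apply wsum_le. intros k _. specialize (ht_pos k). destruct (ee_range beta gamma T k).
      destruct (k <=? K)%nat eqn:E.
      + fold e in H, H0. assert (t k * e k <= t k * 1) by (apply Rmult_le_compat_l; lra).
        assert (0 <= t k * (eps / 2)) by (apply Rmult_le_pos; lra). lra.
      + apply Nat.leb_gt in E. assert (e k <= eps / 2) by (apply He_small; auto).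
        assert (t k * e k <= t k * (eps / 2)) by (apply Rmult_le_compat_l; lra). lra.
    - rewrite wsum_plus, wsum_scal. unfold T, Tbg.
      assert (wsum beta gamma (fun k => if (k <=? K)%nat then t k else 0) n <= C).
      { unfold wsum. eapply Rle_trans.
        - apply sum_Rle. intros k _.
          instantiate (1 := fun k => if (k <=? K)%nat then t k else 0).
          simpl. destruct (in_window beta gamma n k); [lra|]. destruct (k <=? K)%nat; [|lra].
          left; auto.
        - rewrite sum_cond_eq. unfold C.
          destruct (Nat.le_ge_cases (Nat.min (Z.to_nat (up (gamma n))) K) K) as [Hl|Hl].
          + replace K with (Nat.min (Z.to_nat (up (gamma n))) K +
                (K - Nat.min (Z.to_nat (up (gamma n))) K))%nat at 2 by lia.
            apply psum_mono. intro; left; auto.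
          + replace (Nat.min (Z.to_nat (up (gamma n))) K) with K by lia. lra. }
      lra. }
  rewrite Rminus_0_r, Rabs_right.
  2: { apply Rle_ge. apply Rmult_le_pos; [left; apply Rinv_0_lt_compat; lra|auto]. }
  fold w.
  assert (Hlt : w < eps * T n).
  { assert (2 * C / eps * eps = 2 * C) by (field; lra).
    assert (2 * C < eps * T n).
    { assert (2 * C / eps * eps < T n * eps) by (apply Rmult_lt_compat_r; lra). lra. }
    lra. }
  apply (Rmult_lt_reg_l (T n)). lra.
  rewrite <- Rmult_assoc, Rinv_r, Rmult_1_l by lra. lra.
Qed.

End Strict.
Theorem theorem3p1 (beta gamma t : nat -> R) (a b : R)
  (hab : a < b)
  (hbeta_pos : forall n, 0 < beta n)
  (hgamma_pos : forall n, 0 < gamma n)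
  (hbeta_mono : forall n, beta n <= beta (S n))
  (hgamma_mono : forall n, gamma n <= gamma (S n))
  (hbg : forall n, beta n <= gamma n)
  (hdiff : is_lim_seq (fun n => gamma n - beta n) p_infty)
  (ht_pos : forall k, 0 < t k)
  (hT : is_lim_seq (Tbg beta gamma t) p_infty) :
  (* (i) *)
  (forall theta, 0 < theta <= 1 ->
   forall (fs gs : nat -> R -> R -> R) (f g : R -> R -> R),
     InN theta beta gamma t a b fs f ->
     InN theta beta gamma t a b gs g ->
     InN theta beta gamma t a b (fun k x => fadd (fs k x) (gs k x))
                                (fun x => fadd (f x) (g x)) /\
     (forall c : R,
        InN theta beta gamma t a b (fun k x => fscal c (fs k x))
                                   (fun x => fscal c (f x)))) /\
  (* (ii) inclusion *)
  (forall theta delta, 0 < theta -> theta <= delta -> delta <= 1 ->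
   forall (fs : nat -> R -> R -> R) (f : R -> R -> R),
     InN theta beta gamma t a b fs f -> InN delta beta gamma t a b fs f) /\
  (* (ii) strictness for some theta < delta *)
  (exists theta delta, 0 < theta /\ theta < delta /\ delta <= 1 /\
     exists fs : nat -> R -> R -> R,
       (exists f, InN delta beta gamma t a b fs f) /\
       ~ (exists g, InN theta beta gamma t a b fs g)).
Proof.
  split; [|split].
  - intros theta Hth fs gs f g Hf Hg. split.
    + apply part_i_add; auto.
    + intros c. apply part_i_scal; auto.
  - intros theta delta H1 H2 H3 fs f Hf. eapply part_ii; eauto.
  - exists (/2), 1. split; [lra|split; [lra|split; [lra|]]].
    set (T := Tbg beta gamma t). set (e := ee beta gamma T).
    assert (HW := W_lim beta gamma t ht_pos hgamma_mono hT). fold T e in HW.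
    assert (He0 : forall k, 0 <= e k <= 1) by (intro; apply ee_range).
    exists (fun k x => crisp (e k)). split.
    + exists (fun x => crisp 0). split; [intros; apply crisp_fuzzy|split; [intros; apply crisp_fuzzy|]].
      intros x Hx. eapply squeeze0; [|exact HW]. intros n. simpl. fold T.
      pose proof (inv_rpow_pos (T n) 1). split.
      * apply Rmult_le_pos. lra. apply wsum_nonneg. intros k _. apply Rmult_le_pos.
        left; auto. apply fdist_nonneg; apply crisp_fuzzy.
      * apply Rmult_le_compat_l. lra. apply wsum_le. intros k _. apply Rmult_le_compat_l.
        left; auto. eapply Rle_trans. apply crisp_dist. rewrite Rminus_0_r, Rabs_right.
        lra. destruct (He0 k); lra.
    + intros [g Hg].
      pose proof (part_ii beta gamma t ht_pos hT (/2) 1 _ g a b ltac:(lra) ltac:(lra) ltac:(lra) Hg)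
        as Hg1.
      destruct Hg as [_ [Gf Gl]]. destruct Hg1 as [_ [_ Gl1]].
      assert (Hx : a <= a <= b) by lra.
      specialize (Gf a Hx). specialize (Gl a Hx). specialize (Gl1 a Hx). fold T in Gl, Gl1.
      set (lg := lower (g a) 0).
      set (d := fun k => fdist (crisp (e k)) (g a)).
      assert (Hd : forall k, Rabs (e k - lg) <= d k).
      { intro k. destruct (fdist_ge (crisp (e k)) (g a) 0 (crisp_fuzzy _) Gf ltac:(lra)) as [A _].
        destruct (crisp_lower (e k) 0 ltac:(lra)) as [E _]. rewrite E in A. exact A. }
      assert (HA : forall k, Rabs lg <= e k + d k).
      { intro k. specialize (Hd k). destruct (He0 k).
        replace lg with (- (e k - lg) + e k) by ring.
        eapply Rle_trans. apply Rabs_triang. rewrite Rabs_Ropp, (Rabs_right (e k)); lra. }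
      assert (HB : forall k, e k <= d k + Rabs lg).
      { intro k. specialize (Hd k).
        replace (e k) with ((e k - lg) + lg) by ring.
        eapply Rle_trans. apply Rle_abs. eapply Rle_trans. apply Rabs_triang. lra. }
      assert (Hlg : Rabs lg <= 0).
      { assert (HL := is_lim_seq_plus' _ _ _ _ HW Gl1). rewrite Rplus_0_r in HL.
        apply (lim_bound _ _ HL).
        destruct (ev_gt _ 1 hT) as [N HN]. exists N. intros n Hn. specialize (HN n Hn).
        fold T in HN. rewrite Rpower_1 by lra.
        rewrite <- Rmult_plus_distr_l, <- wsum_plus.
        apply (Rmult_le_reg_l (T n)). lra.
        rewrite <- Rmult_assoc, Rinv_r, Rmult_1_l by lra.
        rewrite Rmult_comm. unfold T at 1, Tbg. rewrite <- wsum_scal.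
        apply wsum_le. intros k _. specialize (HA k). specialize (ht_pos k). unfold d in HA.
        rewrite <- Rmult_plus_distr_l. apply Rmult_le_compat_l; lra. }
      assert (Hlg0 : Rabs lg = 0) by (pose proof (Rabs_pos lg); lra).
      assert (Hcontra : 1 <= 0).
      { apply (lim_bound _ _ Gl).
        destruct (ev_gt _ 1 hT) as [N HN]. exists N. intros n Hn. specialize (HN n Hn).
        fold T in HN. replace (/2) with (/2) by reflexivity. rewrite Rpower_sqrt by lra.
        assert (Hs : 0 < sqrt (T n)) by (apply sqrt_lt_R0; lra).
        assert (Hw : sqrt (T n) <= wsum beta gamma (fun k => t k * d k) n).
        { rewrite <- (phi_mul (T n)) by lra. unfold T at 2, Tbg. rewrite <- wsum_scal.
          apply wsum_le. intros k Hk. specialize (ht_pos k). specialize (HB k). fold d in HB.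
          assert (phi (T n) <= e k).
          { unfold e. apply (proj1 (ee_props _ _ _ k)). right. exists n. split; auto. }
          assert (t k * phi (T n) <= t k * d k) by (apply Rmult_le_compat_l; lra). lra. }
        apply (Rmult_le_reg_l (sqrt (T n))). lra.
        rewrite <- Rmult_assoc, Rinv_r, Rmult_1_l by lra. unfold d in Hw. lra. }
      lra.
Qed.
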